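(* Let $D:\mathbb R^2\setminus\{0\}\to\mathbb R$ be nonnegative, bounded and continuously differentiable, and let $x:[a,b]\to\mathbb R^2\setminus\{0\}$ be a nonrectilinear solution of $\ddot x+D(x)\dot x=-x/|x|^3$. Set $r=|x|$, $c=\det(x,\dot x)$ and $v=-\frac1r+\frac{c^2}{2r^2}$. If $\dot r(t)\ge0$ for all $t\in[a,b]$ and $v(b)\ge0$, then $\dot v\le0$ on $[a,b]$.
   Context: A solution is nonrectilinear if $\det(x,\dot x)$ is not identically zero. *)

(* Defs.v *)
From Stdlib Require Import Reals.
From Coquelicot Require Import Coquelicot.
Open Scope R_scope.

Definition has_deriv_on (a b : R) (f : R -> R) (t l : R) : Prop :=
  forall eps : R, 0 < eps -> exists delta : R, 0 < delta /\
    forall s : R, a <= s <= b -> s <> t -> Rabs (s - t) < delta ->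
      Rabs ((f s - f t) / (s - t) - l) < eps.

Definition C1_punctured (D : R -> R -> R) : Prop :=
  exists Dx Dy : R -> R -> R,
    forall p q : R, (p, q) <> (0, 0) ->
      differentiable_pt_lim D p q (Dx p q) (Dy p q) /\
      continuity_2d_pt Dx p q /\ continuity_2d_pt Dy p q.

Definition norm2 (p q : R) : R := sqrt (p ^ 2 + q ^ 2).
Definition det2 (p1 p2 q1 q2 : R) : R := p1 * q2 - p2 * q1.

(* Main.v *)
Require Import Defs.
From Stdlib Require Import Reals Lra.
From Coquelicot Require Import Coquelicot.
Open Scope R_scope.

Definition Dm (a b t : R) := fun s => a <= s <= b /\ s <> t.
Definition Fw (a b t : R) := within (Dm a b t) (locally t).
#[global] Instance Fw_filter a b t : Filter (Fw a b t).
Proof. apply within_filter, locally_filter. Defined.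
Definition qt (f : R -> R) (t : R) := fun s => (f s - f t) / (s - t).

Lemma hd_to a b f t l : has_deriv_on a b f t l -> filterlim (qt f t) (Fw a b t) (locally l).
Proof.
  intros H. apply filterlim_locally. intros eps.
  destruct (H eps (cond_pos eps)) as [d [Hd Hs]].
  exists (mkposreal d Hd). intros s Hb [Hs1 Hs2].
  change (Rabs (qt f t s - l) < eps). apply Hs; auto.
Qed.

Lemma hd_of a b f t l : filterlim (qt f t) (Fw a b t) (locally l) -> has_deriv_on a b f t l.
Proof.
  intros H eps Heps.
  destruct (proj1 (filterlim_locally _ _) H (mkposreal eps Heps)) as [d Hd].
  exists d. split. apply cond_pos. intros s H1 H2 H3.
  apply (Hd s); [exact H3| split; auto].
Qed.

Lemma Fw_proper a b t : a < b -> a <= t <= b -> ProperFilter' (Fw a b t).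
Proof.
  intros Hab Ht. constructor.
  - intros [d Hd]. pose proof (cond_pos d).
    destruct (Rlt_or_le t b) as [Htb|Htb].
    + set (s := t + Rmin (d/2) ((b - t)/2)).
      assert (0 < Rmin (d/2) ((b-t)/2)) by (apply Rmin_pos; lra).
      assert (Rmin (d/2) ((b-t)/2) <= d/2) by apply Rmin_l.
      assert (Rmin (d/2) ((b-t)/2) <= (b-t)/2) by apply Rmin_r.
      apply (Hd s).
      * change (Rabs (s - t) < d). unfold s. rewrite Rabs_right; lra.
      * unfold s; split; [split|]; lra.
    + set (s := t - Rmin (d/2) ((t - a)/2)).
      assert (0 < Rmin (d/2) ((t-a)/2)) by (apply Rmin_pos; lra).
      assert (Rmin (d/2) ((t-a)/2) <= d/2) by apply Rmin_l.
      assert (Rmin (d/2) ((t-a)/2) <= (t-a)/2) by apply Rmin_r.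
      apply (Hd s).
      * change (Rabs (s - t) < d). unfold s. rewrite Rabs_left; lra.
      * unfold s; split; [split|]; lra.
  - apply within_filter, locally_filter.
Qed.

Lemma hd_unique a b f t l1 l2 : a < b -> a <= t <= b ->
  has_deriv_on a b f t l1 -> has_deriv_on a b f t l2 -> l1 = l2.
Proof.
  intros Hab Ht H1 H2. apply hd_to in H1. apply hd_to in H2.
  pose proof (Fw_proper a b t Hab Ht).
  exact (filterlim_locally_unique _ _ _ H1 H2).
Qed.

Lemma L_plus a b t (f g : R -> R) x y :
  filterlim f (Fw a b t) (locally x) -> filterlim g (Fw a b t) (locally y) ->
  filterlim (fun s => f s + g s) (Fw a b t) (locally (x + y)).
Proof.
  intros Hf Hg. eapply filterlim_comp_2; [exact Hf | exact Hg |].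
  exact (filterlim_plus x y).
Qed.

Lemma L_mult a b t (f g : R -> R) x y :
  filterlim f (Fw a b t) (locally x) -> filterlim g (Fw a b t) (locally y) ->
  filterlim (fun s => f s * g s) (Fw a b t) (locally (x * y)).
Proof.
  intros Hf Hg. eapply filterlim_comp_2; [exact Hf | exact Hg |].
  exact (@filterlim_mult R_AbsRing x y).
Qed.

Lemma L_const a b t (c : R) :
  filterlim (fun _ => c) (Fw a b t) (locally c).
Proof. apply filterlim_const. Qed.

Lemma L_cont a b t (f : R -> R) (h : R -> R) x :
  filterlim f (Fw a b t) (locally x) -> continuous h x -> filterlim (fun s => h (f s)) (Fw a b t) (locally (h x)).
Proof. intros Hf Hh. eapply filterlim_comp; eauto. Qed.

Lemma L_id a b t : filterlim (fun s => s) (Fw a b t) (locally t).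
Proof. intros P HP. unfold filtermap, Fw, within. apply filter_imp with (2 := HP). auto. Qed.

Lemma L_ext a b t (f g : R -> R) l : (forall s, Dm a b t s -> f s = g s) ->
  filterlim f (Fw a b t) (locally l) -> filterlim g (Fw a b t) (locally l).
Proof.
  intros He H. eapply filterlim_ext_loc; [|exact H].
  unfold Fw, within. apply filter_forall. exact He.
Qed.

Lemma hd_cont a b f t l : has_deriv_on a b f t l -> filterlim f (Fw a b t) (locally (f t)).
Proof.
  intros H. apply hd_to in H.
  assert (H2 : filterlim (fun s => f t + qt f t s * (s - t)) (Fw a b t) (locally (f t + l * (t - t)))).
  { apply L_plus; [apply L_const|]. apply L_mult; [exact H|].
    apply L_plus; [apply L_id| apply L_const]. }
  replace (f t + l * (t - t)) with (f t) in H2 by ring.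
  eapply L_ext; [|exact H2]. intros s [_ Hs]. unfold qt. field. lra.
Qed.

Lemma hd_ext a b f g t l : (forall s, a <= s <= b -> f s = g s) -> a <= t <= b ->
  has_deriv_on a b f t l -> has_deriv_on a b g t l.
Proof.
  intros He Ht H eps Heps. destruct (H eps Heps) as [d [Hd Hs]].
  exists d; split; auto. intros s H1 H2 H3. rewrite <- !He; auto.
Qed.

Lemma hd_plus a b f g t lf lg : has_deriv_on a b f t lf -> has_deriv_on a b g t lg ->
  has_deriv_on a b (fun s => f s + g s) t (lf + lg).
Proof.
  intros Hf Hg. apply hd_of. apply hd_to in Hf. apply hd_to in Hg.
  eapply L_ext; [|apply (L_plus _ _ _ _ _ _ _ Hf Hg)].
  intros s [_ Hs]. unfold qt. field. lra.
Qed.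

Lemma hd_mult a b f g t lf lg : has_deriv_on a b f t lf -> has_deriv_on a b g t lg ->
  has_deriv_on a b (fun s => f s * g s) t (f t * lg + g t * lf).
Proof.
  intros Hf Hg. pose proof (hd_cont _ _ _ _ _ Hf) as Cf.
  apply hd_of. apply hd_to in Hf. apply hd_to in Hg.
  eapply L_ext; [|apply L_plus; [apply (L_mult _ _ _ _ _ _ _ Cf Hg)|apply (L_mult _ _ _ _ _ _ _ (L_const _ _ _ (g t)) Hf)]].
  intros s [_ Hs]. unfold qt. simpl. field. lra.
Qed.

Lemma hd_const a b (c : R) t : has_deriv_on a b (fun _ => c) t 0.
Proof.
  intros eps Heps. exists 1. split; [lra|]. intros s _ Hs _.
  replace ((c - c) / (s - t) - 0) with 0 by (field; lra). rewrite Rabs_R0. lra.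
Qed.

Lemma hd_inv a b f t l : (forall s, a <= s <= b -> f s <> 0) -> a <= t <= b ->
  has_deriv_on a b f t l -> has_deriv_on a b (fun s => / f s) t (- l * / f t * / f t).
Proof.
  intros Hn Ht Hf. pose proof (hd_cont _ _ _ _ _ Hf) as Cf.
  apply hd_of. apply hd_to in Hf.
  assert (Ci := L_cont _ _ _ _ Rinv _ Cf (continuous_Rinv _ (Hn t Ht))).
  assert (H : filterlim (fun s => (-1 * qt f t s) * / f s * / f t) (Fw a b t)
     (locally ((-1 * l) * / f t * / f t))).
  { apply L_mult; [apply L_mult; [apply L_mult; [apply L_const|exact Hf]|exact Ci]|apply L_const]. }
  replace (- l * / f t * / f t) with ((-1 * l) * / f t * / f t) by ring.
  eapply L_ext; [|exact H].
  intros s [Hs1 Hs]. unfold qt. simpl. pose proof (Hn s Hs1). pose proof (Hn t Ht). field. repeat split; lra.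
Qed.

Lemma hd_sqrt a b f t l : (forall s, a <= s <= b -> 0 < f s) -> a <= t <= b ->
  has_deriv_on a b f t l -> has_deriv_on a b (fun s => sqrt (f s)) t (l * / (sqrt (f t) + sqrt (f t))).
Proof.
  intros Hn Ht Hf. pose proof (hd_cont _ _ _ _ _ Hf) as Cf.
  apply hd_of. apply hd_to in Hf.
  assert (Cs := L_cont _ _ _ _ sqrt _ Cf (continuous_sqrt _)).
  assert (Hp : forall s, a <= s <= b -> 0 < sqrt (f s)) by (intros; apply sqrt_lt_R0; auto).
  assert (Ci : filterlim (fun s => / (sqrt (f s) + sqrt (f t))) (Fw a b t) (locally (/ (sqrt (f t) + sqrt (f t))))).
  { apply (L_cont _ _ _ _ Rinv).
    - apply L_plus; [exact Cs|apply L_const].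
    - apply continuous_Rinv. pose proof (Hp t Ht); lra. }
  eapply L_ext; [|exact (L_mult _ _ _ _ _ _ _ Hf Ci)].
  intros s [Hs1 Hs]. unfold qt. pose proof (Hp s Hs1). pose proof (Hp t Ht).
  pose proof (sqrt_sqrt (f s) ltac:(pose proof (Hn s Hs1); lra)).
  pose proof (sqrt_sqrt (f t) ltac:(pose proof (Hn t Ht); lra)).
  field_simplify_eq; [|split; lra]. nra.
Qed.

Lemma hd_interior a b f t l : a < t < b -> has_deriv_on a b f t l -> derivable_pt_lim f t l.
Proof.
  intros Ht H eps Heps. destruct (H eps Heps) as [d [Hd Hs]].
  assert (Hm : 0 < Rmin d (Rmin (t - a) (b - t))) by (repeat apply Rmin_pos; lra).
  exists (mkposreal _ Hm). intros h Hh Hlt. simpl in Hlt.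
  pose proof (Rmin_l d (Rmin (t - a) (b - t))).
  pose proof (Rmin_r d (Rmin (t - a) (b - t))).
  pose proof (Rmin_l (t - a) (b - t)). pose proof (Rmin_r (t - a) (b - t)).
  assert (Habs := Rabs_def2 h _ Hlt).
  specialize (Hs (t + h)). replace (t + h - t) with h in Hs by ring.
  apply Hs.
  - split; lra.
  - lra.
  - lra.
Qed.

Lemma hd_cont_pt a b f t l : has_deriv_on a b f t l -> forall eps, 0 < eps ->
  exists d, 0 < d /\ forall s, a <= s <= b -> Rabs (s - t) < d -> Rabs (f s - f t) < eps.
Proof.
  intros H eps Heps. apply hd_cont in H.
  destruct (proj1 (filterlim_locally _ _) H (mkposreal eps Heps)) as [d Hd].
  exists d. split; [apply cond_pos|]. intros s Hs1 Hs2.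
  destruct (Req_dec s t) as [->|Hne].
  - replace (f t - f t) with 0 by ring. rewrite Rabs_R0. lra.
  - exact (Hd s Hs2 (conj Hs1 Hne)).
Qed.

Lemma mono a b f f' : a < b -> (forall s, a <= s <= b -> has_deriv_on a b f s (f' s) /\ f' s <= 0) ->
  forall t, a <= t <= b -> f b <= f t.
Proof.
  intros Hab H t Ht. destruct (Req_dec t b) as [->|Htb]; [lra|].
  apply Rnot_lt_le. intros Hlt. set (g := f b - f t).
  assert (Hg : 0 < g/3) by (unfold g; lra).
  destruct (hd_cont_pt _ _ _ _ _ (proj1 (H t Ht)) _ Hg) as [d1 [Hd1 C1]].
  destruct (hd_cont_pt _ _ _ _ _ (proj1 (H b ltac:(lra))) _ Hg) as [d2 [Hd2 C2]].
  set (s1 := t + Rmin d1 (b - t) / 2).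
  assert (0 < Rmin d1 (b - t)) by (apply Rmin_pos; lra).
  pose proof (Rmin_l d1 (b - t)). pose proof (Rmin_r d1 (b - t)).
  set (s2 := b - Rmin d2 (b - s1) / 2).
  assert (0 < Rmin d2 (b - s1)) by (apply Rmin_pos; unfold s1; lra).
  pose proof (Rmin_l d2 (b - s1)). pose proof (Rmin_r d2 (b - s1)).
  assert (E1 : Rabs (f s1 - f t) < g/3).
  { apply C1. unfold s1; lra. unfold s1. rewrite Rabs_right; lra. }
  assert (E2 : Rabs (f s2 - f b) < g/3).
  { apply C2. unfold s2, s1 in *; lra. unfold s2, s1 in *. rewrite Rabs_left; lra. }
  destruct (MVT_cor2 f f' s1 s2 ltac:(unfold s2, s1 in *; lra)) as [c [Hc1 Hc2]].
  { intros c Hc. apply (hd_interior a b). unfold s2, s1 in *; lra. apply H. unfold s2, s1 in *; lra. }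
  assert (f' c <= 0) by (apply H; unfold s2, s1 in *; lra).
  assert (f s2 - f s1 <= 0) by (rewrite Hc1; apply Rmult_le_0_r; unfold s2 in *; lra).
  apply Rabs_def2 in E1. apply Rabs_def2 in E2. unfold g in *. lra.
Qed.
Lemma hd_val a b f t l l' : has_deriv_on a b f t l -> l = l' -> has_deriv_on a b f t l'.
Proof. intros H ->; exact H. Qed.

Theorem lemma7p3 (D : R -> R -> R) (a b : R) (x1 x2 y1 y2 : R -> R) :
  a < b ->
  (forall p q, (p, q) <> (0, 0) -> 0 <= D p q) ->
  (exists M, forall p q, (p, q) <> (0, 0) -> D p q <= M) ->
  C1_punctured D ->
  (forall t, a <= t <= b -> (x1 t, x2 t) <> (0, 0)) ->
  (forall t, a <= t <= b ->
     has_deriv_on a b x1 t (y1 t) /\ has_deriv_on a b x2 t (y2 t) /\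
     has_deriv_on a b y1 t
       (- D (x1 t) (x2 t) * y1 t - x1 t / norm2 (x1 t) (x2 t) ^ 3) /\
     has_deriv_on a b y2 t
       (- D (x1 t) (x2 t) * y2 t - x2 t / norm2 (x1 t) (x2 t) ^ 3)) ->
  (exists t, a <= t <= b /\ det2 (x1 t) (x2 t) (y1 t) (y2 t) <> 0) ->
  let r := fun t => norm2 (x1 t) (x2 t) in
  let c := fun t => det2 (x1 t) (x2 t) (y1 t) (y2 t) in
  let v := fun t => - / r t + c t ^ 2 / (2 * r t ^ 2) in
  (forall t l, a <= t <= b -> has_deriv_on a b r t l -> 0 <= l) ->
  0 <= v b ->
  forall t, a <= t <= b ->
    (exists l, has_deriv_on a b v t l) /\
    (forall l, has_deriv_on a b v t l -> l <= 0).
Proof.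
  intros Hab HD0 _ _ Hnz Hsol _ r c v Hrd Hvb t Ht.
  set (u := fun s => x1 s * x1 s + x2 s * x2 s).
  assert (Hu : forall s, a <= s <= b -> 0 < u s).
  { intros s Hs. unfold u. destruct (Req_dec (x1 s) 0) as [E1|E1];
      destruct (Req_dec (x2 s) 0) as [E2|E2].
    - exfalso. apply (Hnz s Hs). rewrite E1, E2. reflexivity.
    - pose proof (Rsqr_pos_lt _ E2). unfold Rsqr in *. nra.
    - pose proof (Rsqr_pos_lt _ E1). unfold Rsqr in *. nra.
    - pose proof (Rsqr_pos_lt _ E1). unfold Rsqr in *. nra. }
  assert (Hru : forall s, r s = sqrt (u s)).
  { intros s. unfold r, norm2, u. f_equal. ring. }
  assert (Hrp : forall s, a <= s <= b -> 0 < r s).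
  { intros s Hs. rewrite Hru. apply sqrt_lt_R0. auto. }
  set (rd := fun s => (x1 s * y1 s + x2 s * y2 s) / r s).
  set (Dv := fun s => D (x1 s) (x2 s)).
  assert (HDv : forall s, a <= s <= b -> 0 <= Dv s) by (intros; apply HD0, Hnz; auto).
  assert (Hr : forall s, a <= s <= b -> has_deriv_on a b r s (rd s)).
  { intros s Hs. destruct (Hsol s Hs) as (H1 & H2 & _ & _).
    pose proof (hd_plus _ _ _ _ _ _ _ (hd_mult _ _ _ _ _ _ _ H1 H1) (hd_mult _ _ _ _ _ _ _ H2 H2)) as Hu'.
    pose proof (hd_sqrt _ _ u _ _ Hu Hs Hu') as Hs'.
    eapply hd_ext with (f := fun s => sqrt (u s)); [intros; symmetry; apply Hru|exact Hs|].
    eapply hd_val; [exact Hs'|]. unfold rd. rewrite Hru. pose proof (Hu s Hs).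
    pose proof (sqrt_lt_R0 _ H). field. lra. }
  assert (Hc : forall s, a <= s <= b -> has_deriv_on a b c s (- Dv s * c s)).
  { intros s Hs. destruct (Hsol s Hs) as (H1 & H2 & H3 & H4).
    pose proof (hd_plus _ _ _ _ _ _ _ (hd_mult _ _ _ _ _ _ _ H1 H4)
      (hd_mult _ _ _ _ _ _ _ (hd_mult _ _ _ _ _ _ _ (hd_const a b (-1) s) H2) H3)) as Hc'.
    eapply hd_ext; [|exact Hs|eapply hd_val; [exact Hc'|]].
    - intros; unfold c, det2; ring.
    - unfold Dv, c, det2. cbv beta. unfold Rdiv. ring. }
  set (w := fun s => c s * c s + (-2) * r s).
  assert (Hw : forall s, a <= s <= b -> w b <= w s).
  { apply (mono a b w (fun s => c s * (- Dv s * c s) + c s * (- Dv s * c s) + (-2) * rd s)); auto.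
    intros s Hs. split.
    - eapply hd_val.
      + exact (hd_plus _ _ _ _ _ _ _ (hd_mult _ _ _ _ _ _ _ (Hc s Hs) (Hc s Hs))
           (hd_mult _ _ _ _ _ _ _ (hd_const a b (-2) s) (Hr s Hs))).
      + cbv beta; ring.
    - pose proof (Hrd s _ Hs (Hr s Hs)). pose proof (HDv s Hs).
      pose proof (Rle_0_sqr (c s)). unfold Rsqr in *.
      assert (0 <= Dv s * (c s * c s)) by (apply Rmult_le_pos; auto). nra. }
  assert (Hwb : 0 <= w b).
  { pose proof (Hrp b ltac:(lra)).
    assert (w b = 2 * r b ^ 2 * v b) by (unfold w, v; field; lra).
    rewrite H0. apply Rmult_le_pos; [|exact Hvb]. nra. }
  assert (HwT := Hw t Ht). unfold w in HwT.
  set (ir := fun s => / r s).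
  assert (Hir : has_deriv_on a b ir t (- rd t * / r t * / r t)).
  { apply hd_inv; auto. intros s Hs. pose proof (Hrp s Hs). lra. }
  pose proof (hd_plus _ _ _ _ _ _ _ (hd_mult _ _ _ _ _ _ _ (hd_const a b (-1) t) Hir)
     (hd_mult _ _ _ _ _ _ _ (hd_mult _ _ _ _ _ _ _ (Hc t Ht) (Hc t Ht))
        (hd_mult _ _ _ _ _ _ _ (hd_mult _ _ _ _ _ _ _ Hir Hir) (hd_const a b (/2) t)))) as Hv0.
  assert (Hv : exists L, has_deriv_on a b v t L /\ L <= 0).
  { eexists. split.
    - eapply hd_ext; [|exact Ht|exact Hv0].
      intros s Hs. pose proof (Hrp s Hs). unfold v, ir. simpl. field. lra.
    - simpl. pose proof (Hrp t Ht). set (R0 := r t) in *. set (C := c t) in *.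
      unfold ir. fold R0.
      pose proof (Hrd t _ Ht (Hr t Ht)). pose proof (HDv t Ht).
      unfold w in Hwb. assert (HC : 2 * R0 <= C * C) by lra.
      set (rr := rd t) in *. set (dd := Dv t) in *.
      assert (E : forall z, z = (rr * (R0 - C * C) - dd * (C * C) * R0) / (R0 * R0 * R0) -> z <= 0).
      { intros z ->.
        assert (0 <= rr * (C * C - R0)) by (apply Rmult_le_pos; lra).
        assert (0 <= dd * (C * C) * R0) by (apply Rmult_le_pos; [apply Rmult_le_pos|]; nra).
        assert (Hn : rr * (R0 - C * C) - dd * (C * C) * R0 <= 0) by nra.
        assert (Hi : 0 < / (R0 * R0 * R0)) by (apply Rinv_0_lt_compat; repeat apply Rmult_lt_0_compat; lra).
        unfold Rdiv. nra. }
      apply E. field. lra. }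
  destruct Hv as [L [HL HL0]]. split.
  - exists L; exact HL.
  - intros l Hl. rewrite (hd_unique _ _ _ _ _ _ Hab Ht Hl HL). exact HL0.
Qed.
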